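(* Let $(Y,\mathfrak{T},\mathcal{P})$ be a primal fuzzy topological space. Then the map $Cl^\diamond:\mathbb{I}^Y\to\mathbb{I}^Y$, $Cl^\diamond(\mu)=\mu\cup\mu^\diamond$, is a Kuratowski fuzzy closure operator, i.e. for all $\mu,\nu\in\mathbb{I}^Y$: $Cl^\diamond(0_Y)=0_Y$, $\mu\subseteq Cl^\diamond(\mu)$, $Cl^\diamond(\mu\cup\nu)=Cl^\diamond(\mu)\cup Cl^\diamond(\nu)$, and $Cl^\diamond(Cl^\diamond(\mu))=Cl^\diamond(\mu)$.
   Context: Let $Y$ be a nonempty set and $\mathbb{I}=[0,1]$. A fuzzy set in $Y$ is a map $Y\to\mathbb{I}$; $\mathbb{I}^Y$ is the set of all fuzzy sets; $0_Y,1_Y$ are the constant maps with values $0,1$; $\mu\subseteq\nu$ means $\mu(y)\le\nu(y)$ for all $y$; unions/intersections are pointwise sup/inf; $\bar\mu=1_Y-\mu$. For $\mu,\nu\in\mathbb{I}^Y$, $(\mu\oplus\nu)(y)=\min(\mu(y)+\nu(y),1)$. A fuzzy point $y_t$ ($y\in Y$, $t\in(0,1]$) is the fuzzy set with value $t$ at $y$ and $0$ elsewhere; $y_t\in\mu$ means $t\le\mu(y)$. We write $y_t\prec\mu$ if $t+\mu(y)>1$. A set $F$ of fuzzy points is identified with the fuzzy set $y\mapsto\sup\{t: y_t\in F\}$ (with $\sup\emptyset=0$). A fuzzy topology on $Y$ is a family $\mathfrak{T}\subseteq\mathbb{I}^Y$ containing $0_Y,1_Y$ and closed under finite intersections and arbitrary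 unions. For a fuzzy point $y_t$, $\mathcal{Q}(y_t)=\{\mu\in\mathfrak{T}: y_t\prec\mu\}$. A fuzzy primal on $Y$ is a family $\mathcal{P}\subseteq\mathbb{I}^Y$ such that: (i) $1_Y\notin\mathcal{P}$; (ii) if $\mu\in\mathcal{P}$ and $\nu\subseteq\mu$ then $\nu\in\mathcal{P}$; (iii) if $\mu\cap\nu\in\mathcal{P}$ then $\mu\in\mathcal{P}$ or $\nu\in\mathcal{P}$. A primal fuzzy topological space is a triple $(Y,\mathfrak{T},\mathcal{P})$ with $\mathfrak{T}$ a fuzzy topology and $\mathcal{P}$ a fuzzy primal on $Y$. For $\lambda\in\mathbb{I}^Y$, $\lambda^\diamond$ is the set of fuzzy points $y_t$ such that $\bar{\lambda}\oplus\bar{\mu}\in\mathcal{P}$ for every $\mu\in\mathcal{Q}(y_t)$. *)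

(* Defs.v *)
(* fuzzy sets are functions Y -> R (R : realType)
   whose values lie in [0,1]. *)
From HB Require Import structures.
From mathcomp Require Import all_boot all_order all_algebra.
From mathcomp Require Import classical_sets boolp reals.
Set Implicit Arguments. Unset Strict Implicit. Unset Printing Implicit Defensive.
Import Order.TTheory GRing.Theory Num.Theory.
Local Open Scope ring_scope.
Local Open Scope classical_set_scope.

Section Fuzzy.
Variables (R : realType) (Y : Type).

Definition fuzzy (mu : Y -> R) : Prop := forall y, 0 <= mu y <= 1.
Definition fzero : Y -> R := fun _ => 0.
Definition fone : Y -> R := fun _ => 1.
Definition fsub (mu nu : Y -> R) : Prop := forall y, mu y <= nu y.
Definition funion (mu nu : Y -> R) : Y -> R := fun y => Num.max (mu y) (nu y).
Definition finter (mu nu : Y -> R) : Y -> R := fun y => Num.min (mu y) (nu y).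
Definition fcompl (mu : Y -> R) : Y -> R := fun y => 1 - mu y.
Definition foplus (mu nu : Y -> R) : Y -> R := fun y => Num.min (mu y + nu y) 1.
(* arbitrary union: pointwise supremum (sup of the empty set is 0) *)
Definition fbigunion (F : set (Y -> R)) : Y -> R :=
  fun y => sup [set mu y | mu in F].

Definition fuzzy_topology (T : set (Y -> R)) : Prop :=
  [/\ T `<=` fuzzy, T fzero, T fone,
      (forall mu nu, T mu -> T nu -> T (finter mu nu)) &
      (forall F, F `<=` T -> T (fbigunion F))].

Definition fuzzy_primal (P : set (Y -> R)) : Prop :=
  [/\ P `<=` fuzzy, ~ P fone,
      (forall mu nu, fuzzy nu -> P mu -> fsub nu mu -> P nu) &
      (forall mu nu, fuzzy mu -> fuzzy nu -> P (finter mu nu) -> P mu \/ P nu)].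

(* Q(y_t) : open fuzzy sets quasi-coincident with the fuzzy point y_t *)
Definition Qnbhd (T : set (Y -> R)) (y : Y) (t : R) : set (Y -> R) :=
  [set mu | T mu /\ 1 < t + mu y].

(* lambda^diamond, as the fuzzy set y |-> sup { t in (0,1] : y_t in lambda^diamond } *)
Definition fdiamond (T P : set (Y -> R)) (lam : Y -> R) : Y -> R :=
  fun y => sup [set t : R | 0 < t <= 1 /\
     forall mu, Qnbhd T y t mu -> P (foplus (fcompl lam) (fcompl mu))].

Definition Cldiamond (T P : set (Y -> R)) (mu : Y -> R) : Y -> R :=
  funion mu (fdiamond T P mu).

End Fuzzy.

(* Main.v *)
Require Import Defs.
From mathcomp Require Import all_boot all_order all_algebra.
From mathcomp Require Import classical_sets boolp reals.
From mathcomp Require Import lra.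
Import Order.TTheory GRing.Theory Num.Theory.
Local Open Scope ring_scope.
Local Open Scope classical_set_scope.

Set Implicit Arguments.
Section Aux.
Variables (R : realType) (Y : Type) (T P : set (Y -> R)).
Hypothesis HT : fuzzy_topology T.
Hypothesis HP : fuzzy_primal P.

Definition Sd (lam : Y -> R) (y : Y) : set R := [set t : R | 0 < t <= 1 /\
     forall mu, Qnbhd T y t mu -> P (foplus (fcompl lam) (fcompl mu))].

Lemma D_ge lam y t : Sd lam y t -> t <= fdiamond T P lam y.
Proof.
move=> St; have hub : has_ubound (Sd lam y) by exists 1 => s [/andP[_ ->]].
exact: (ub_le_sup hub St).
Qed.

Lemma D_le lam y x : 0 <= x -> (forall t, Sd lam y t -> t <= x) ->
  fdiamond T P lam y <= x.
Proof.
move=> x0 H; rewrite /fdiamond.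
have [[t Ht]|ne] := pselect (exists t, Sd lam y t).
  by apply: ge_sup; [exists t; exact: Ht| move=> s Hs; exact: H].
have -> : [set t : R | 0 < t <= 1 /\
     forall mu, Qnbhd T y t mu -> P (foplus (fcompl lam) (fcompl mu))] = set0.
  by apply/seteqP; split => // s Hs; apply: ne; exists s.
by rewrite sup0.
Qed.

Lemma D_ge0 lam y : 0 <= fdiamond T P lam y.
Proof.
rewrite /fdiamond.
have [[t Ht]|ne] := pselect (exists t, Sd lam y t).
  have := D_ge Ht; rewrite /fdiamond; apply: le_trans.
  by case: Ht => /andP[/ltW ? _] _.
have -> : [set t : R | 0 < t <= 1 /\
     forall mu, Qnbhd T y t mu -> P (foplus (fcompl lam) (fcompl mu))] = set0.
  by apply/seteqP; split => // s Hs; apply: ne; exists s.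
by rewrite sup0.
Qed.

Lemma D_le1 lam y : fdiamond T P lam y <= 1.
Proof. by apply: D_le => // t [/andP[_ ->]]. Qed.

Lemma D_fuzzy lam : fuzzy (fdiamond T P lam).
Proof. by move=> y; rewrite D_ge0 D_le1. Qed.

Lemma foplus_fuzzy (a b : Y -> R) : fuzzy a -> fuzzy b -> fuzzy (foplus (fcompl a) (fcompl b)).
Proof.
move=> Ha Hb y; rewrite /foplus /fcompl.
move: (Ha y) (Hb y) => /andP[? ?] /andP[? ?].
rewrite ge_min lexx orbT andbT le_min ler01 andbT; lra.
Qed.

Lemma D0 y : fdiamond T P (@fzero R Y) y = 0.
Proof.
case: HT => Tf _ T1 _ _; case: HP => _ nP1 _ _.
apply/le_anti; rewrite D_ge0 andbT; apply: D_le => // t [/andP[t0 _] H].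
exfalso; apply: nP1.
have E : foplus (fcompl (@fzero R Y)) (fcompl (@fone R Y)) = @fone R Y.
  by apply: funext => z; rewrite /foplus /fcompl /fzero /fone subr0 subrr addr0 minxx.
rewrite -E; apply: H; split => //; rewrite /fone; lra.
Qed.

Lemma D_mono lam lam' y : fuzzy lam' -> fsub lam lam' ->
  fdiamond T P lam y <= fdiamond T P lam' y.
Proof.
case: HT => Tf _ _ _ _; case: HP => _ _ Pd _.
move=> F' sub; apply: D_le; first exact: D_ge0.
move=> t [t01 H]; apply: D_ge; split => // m Qm.
apply: (Pd _ _ _ (H m Qm)); first by apply: foplus_fuzzy => //; apply: Tf; case: Qm.
move=> z; rewrite /foplus /fcompl le_min; apply/andP; split; rewrite ge_min.
  by apply/orP; left; move: (sub z) => ?; lra.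
by rewrite lexx orbT.
Qed.

Lemma not_Sd lam y t : 0 < t <= 1 -> ~ Sd lam y t ->
  exists m, Qnbhd T y t m /\ ~ P (foplus (fcompl lam) (fcompl m)).
Proof.
move=> t01 nS.
have [H|H] := pselect (forall mu, Qnbhd T y t mu -> P (foplus (fcompl lam) (fcompl mu))).
  by exfalso; apply: nS.
move/existsNP: H => [m /not_implyP Hm]; by exists m.
Qed.

Lemma D_union mu nu y : fuzzy mu -> fuzzy nu ->
  fdiamond T P (funion mu nu) y =
  Num.max (fdiamond T P mu y) (fdiamond T P nu y).
Proof.
move=> Fm Fn.
have Fu : fuzzy (funion mu nu).
  move=> z; move: (Fm z) (Fn z) => /andP[? ?] /andP[? ?].
  by rewrite /funion le_max ge_max; apply/andP; split; [apply/orP; left | apply/andP; split].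
apply/le_anti; apply/andP; split; last first.
  by rewrite ge_max !D_mono // => z; rewrite /funion le_max lexx ?orbT.
apply: D_le; first by rewrite le_max D_ge0.
move=> t [t01 H]; rewrite leNgt; apply/negP => lt.
case: HT => Tf _ _ TI _; case: HP => _ _ Pd PI.
move: lt; rewrite gt_max => /andP[lt1 lt2].
have [m1 [Q1 nP1]] : exists m, Qnbhd T y t m /\ ~ P (foplus (fcompl mu) (fcompl m)).
  by apply: not_Sd => // S1; have := D_ge S1; rewrite leNgt lt1.
have [m2 [Q2 nP2]] : exists m, Qnbhd T y t m /\ ~ P (foplus (fcompl nu) (fcompl m)).
  by apply: not_Sd => // S1; have := D_ge S1; rewrite leNgt lt2.
case: Q1 => T1 q1; case: Q2 => T2 q2.
have Fm1 := Tf _ T1; have Fm2 := Tf _ T2.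
have Q : Qnbhd T y t (finter m1 m2).
  split; first exact: TI.
  rewrite /finter /=.
  have: 1 - t < Num.min (m1 y) (m2 y) by rewrite lt_min; apply/andP; split; lra.
  lra.
have := H _ Q => PC.
have : P (finter (foplus (fcompl mu) (fcompl m1)) (foplus (fcompl nu) (fcompl m2))).
  apply: (Pd _ _ _ PC).
    move=> z; move: (foplus_fuzzy Fm Fm1 z) (foplus_fuzzy Fn Fm2 z).
    move=> /andP[? ?] /andP[? ?].
    by rewrite /finter le_min ge_min; apply/andP; split; [apply/andP|apply/orP; left].
  move=> z; rewrite /finter /foplus /fcompl /funion le_min.
  apply/andP; split; last by rewrite !ge_min lexx orbT.
  case: (leP (mu z) (nu z)) => h.
    rewrite ge_min; apply/orP; right; rewrite ge_min; apply/orP; left.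
    have : Num.min (m1 z) (m2 z) <= m2 z by rewrite ge_min lexx orbT.
    lra.
  rewrite ge_min; apply/orP; left; rewrite ge_min; apply/orP; left.
  have : Num.min (m1 z) (m2 z) <= m1 z by rewrite ge_min lexx.
  lra.
by case/PI; [apply: foplus_fuzzy| apply: foplus_fuzzy| |].
Qed.

Lemma D_DD lam y : fuzzy lam ->
  fdiamond T P (fdiamond T P lam) y <= fdiamond T P lam y.
Proof.
move=> Fl; apply: D_le; first exact: D_ge0.
move=> t [t01 H]; apply: D_ge; split => // m Qm.
case: HT => Tf _ _ _ _; case: HP => _ nP1 _ _.
have [//|nP] := pselect (P (foplus (fcompl lam) (fcompl m))).
exfalso; apply: nP1.
have Fm := Tf _ (proj1 Qm).
have B : forall z, fdiamond T P lam z <= 1 - m z.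
  move=> z; apply: D_le; first by move: (Fm z) => /andP[_ ?]; lra.
  move=> s [s01 Hs]; rewrite leNgt; apply/negP => lt.
  apply: nP; apply: Hs; split; first exact: (proj1 Qm).
  lra.
have E : foplus (fcompl (fdiamond T P lam)) (fcompl m) = @fone R Y.
  apply: funext => z; rewrite /foplus /fcompl /fone min_r //.
  move: (B z); lra.
rewrite -E; exact: H.
Qed.

End Aux.

Theorem theorem4p5 (R : realType) (Y : Type) (y0 : Y)
    (T P : set (Y -> R)) :
  fuzzy_topology T -> fuzzy_primal P ->
  [/\ Cldiamond T P (@fzero R Y) = @fzero R Y,
      (forall mu, fuzzy mu -> fsub mu (Cldiamond T P mu)),
      (forall mu nu, fuzzy mu -> fuzzy nu ->
         Cldiamond T P (funion mu nu)
         = funion (Cldiamond T P mu) (Cldiamond T P nu)) &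
      (forall mu, fuzzy mu ->
         Cldiamond T P (Cldiamond T P mu) = Cldiamond T P mu)].
Proof.
move=> HT HP; split.
- apply: funext => y; rewrite /Cldiamond /funion D0 //.
  by rewrite /fzero maxxx.
- by move=> mu _ y; rewrite /Cldiamond /funion le_max lexx.
- move=> mu nu Fm Fn; apply: funext => y.
  rewrite /Cldiamond /funion D_union //.
  exact: maxACA.
- move=> mu Fm; apply: funext => y.
  have Fc : fuzzy (Cldiamond T P mu).
    move=> z; move: (Fm z) (@D_fuzzy R Y T P mu z) => /andP[? ?] /andP[? ?].
    by rewrite /Cldiamond /funion le_max ge_max; apply/andP; split; [apply/orP; left | apply/andP; split].
  rewrite {1}/Cldiamond /funion max_l //.
  rewrite /Cldiamond /funion D_union //; last exact: D_fuzzy.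
  rewrite ge_max !le_max lexx orbT /=.
  by rewrite (@D_DD R Y T P HT HP mu y Fm) orbT.
Qed.
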